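(* Let $G=(A\cup B,E)$ be a bipartite graph with orderings $\sigma_A=(a_1,\ldots,a_n)$ of $A$ and $\sigma_B=(b_1,\ldots,b_m)$ of $B$, and let $M$ be the ordered bipartite adjacency matrix with rows $a_1,\ldots,a_n$, columns $b_1,\ldots,b_m$, and entry $m_{i,p}=1$ if $a_ib_p\in E$ and $0$ otherwise. Then $G$ admits a Stick representation respecting $\sigma_A$ and $\sigma_B$ if and only if $M$ contains none of the following ordered submatrices (where $*$ denotes an arbitrary entry $0$ or $1$): (P1) rows $i<j<k$ and columns $p<q<r$ with $m_{i,q}=1$, $m_{j,q}=0$, $m_{j,r}=1$, $m_{k,p}=1$; (P2) rows $i<j<k$ and columns $p<q$ with $m_{i,p}=1$, $m_{j,p}=0$, $m_{j,q}=1$, $m_{k,p}=1$; (P3) rows $i<j$ and columns $p<q<r$ with $m_{i,q}=1$, $m_{j,p}=1$, $m_{j,q}=0$, $m_{j,r}=1$. That is, the forbidden patterns are $P_1=\begin{bmatrix} * & 1 & * \\ * & 0 & 1 \\ 1 & * & * \end{bmatrix}$, $P_2=\begin{bmatrix} 1 & * \\ 0 & 1 \\ 1 & * \end{bmatrix}$, $P_3=\begin{bmatrix} * & 1 & * \\ 1 & 0 & 1 \end{bmatrix}$, with rows and columns taken in the given order.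
   Context: A Stick representation of a bipartite graph $G=(A\cup B,E)$ (with $A$ horizontal and $B$ vertical) assigns to each vertex of $A$ a horizontal segment and to each vertex of $B$ a vertical segment such that the left endpoints of all horizontal segments and the bottom endpoints of all vertical segments lie on a fixed ground line $\ell$ of slope $-1$, and a horizontal and a vertical segment intersect if and only if the corresponding vertices are adjacent in $G$. The representation respects $\sigma_A$ and $\sigma_B$ if, ordering the points where segments touch $\ell$ from left to right, the $i$th horizontal segment corresponds to the $i$th vertex of $\sigma_A$ and the $j$th vertical segment corresponds to the $j$th vertex of $\sigma_B$. An ordered submatrix uses a subset of rows and a subset of columns in their original relative order. *)

(* Defs.v *)
From mathcomp Require Import all_boot.
From Stdlib Require Import Reals.
Set Implicit Arguments. Unset Strict Implicit. Unset Printing Implicit Defensive.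

(* An ordered bipartite graph: A = {a_0,...,a_(n-1)} in the order sigma_A,
   B = {b_0,...,b_(m-1)} in the order sigma_B, and adj i p <-> a_i b_p in E.
   The ordered bipartite adjacency matrix is M = \matrix_(i,p) adj i p. *)

(* Ground line l : { (t, -t) | t in R }, slope -1; "left to right" along l
   means increasing first coordinate t. *)

Definition hseg (x h : R) : R * R -> Prop :=
  fun P => P.2 = (- x)%R /\ (x <= P.1 <= x + h)%R.

Definition vseg (y v : R) : R * R -> Prop :=
  fun P => P.1 = y /\ (- y <= P.2 <= - y + v)%R.

Definition seg_meet (S T : R * R -> Prop) : Prop := exists P, S P /\ T P.

Definition stick_rep_respecting (n m : nat) (adj : 'I_n -> 'I_m -> bool) : Prop :=
  exists (x h : 'I_n -> R) (y v : 'I_m -> R),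
    (forall i j : 'I_n, (i < j)%N -> (x i < x j)%R) /\
    (forall p q : 'I_m, (p < q)%N -> (y p < y q)%R) /\
    (forall (i : 'I_n) (p : 'I_m), x i <> y p) /\
    (forall i, (0 < h i)%R) /\ (forall p, (0 < v p)%R) /\
    (forall i p, adj i p <-> seg_meet (hseg (x i) (h i)) (vseg (y p) (v p))).

Definition has_P1 (n m : nat) (adj : 'I_n -> 'I_m -> bool) : Prop :=
  exists (i j k : 'I_n) (p q r : 'I_m),
    [/\ (i < j < k)%N, (p < q < r)%N &
        [/\ adj i q, ~~ adj j q, adj j r & adj k p]].

Definition has_P2 (n m : nat) (adj : 'I_n -> 'I_m -> bool) : Prop :=
  exists (i j k : 'I_n) (p q : 'I_m),
    [/\ (i < j < k)%N, (p < q)%N &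
        [/\ adj i p, ~~ adj j p, adj j q & adj k p]].

Definition has_P3 (n m : nat) (adj : 'I_n -> 'I_m -> bool) : Prop :=
  exists (i j : 'I_n) (p q r : 'I_m),
    [/\ (i < j)%N, (p < q < r)%N &
        [/\ adj i q, adj j p, ~~ adj j q & adj j r]].

(* Main.v *)
Require Import Defs.
From mathcomp Require Import all_boot zify.
From Stdlib Require Import Reals Lra.

Lemma bigmax_wit (I : finType) (P : pred I) (F : I -> nat) :
  (0 < \max_(i | P i) F i)%N -> exists i, P i /\ F i = \max_(i | P i) F i.
Proof.
case: (pickP P) => [i0 Pi0 | P0].
  have : (0 < #|P|)%N by apply/card_gt0P; exists i0.
  move=> /(eq_bigmax_cond F) [j Pj ->] _; by exists j.
by rewrite big_pred0.
Qed.

Lemma meetE (x h y v : R) :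
  seg_meet (hseg x h) (vseg y v) <-> (x <= y /\ y - x <= h /\ y - x <= v)%R.
Proof.
split.
  move=> [[a b] [[/= H1 H2] [/= H3 H4]]]; subst; lra.
move=> H; exists (y, (- x)%R); rewrite /hseg /vseg /=; lra.
Qed.

Lemma INR_diff (a b c : nat) : (a < b)%N ->
  ((INR b - INR a <= INR c + /2)%R <-> (b - a <= c)%N).
Proof.
move=> ab; split.
  move=> H.
  have : (INR b < INR (c + a + 1))%R.
    rewrite !plus_INR /=; lra.
  move/INR_lt/ltP; lia.
move=> H.
have : (INR b <= INR (c + a))%R.
  apply: le_INR; apply/leP; lia.
rewrite plus_INR; lra.
Qed.

Section C.
Variables (n m : nat) (adj : 'I_n -> 'I_m -> bool).

Definition cc (p : 'I_m) : nat :=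
  \max_(kp : 'I_n * 'I_m | (kp.2 <= p)%N && adj kp.1 kp.2) kp.1.
Definition XX (i : nat) := (m.+1 * i)%N.
Definition YY (p : 'I_m) := (m.+1 * cc p + p + 1)%N.
Definition Hn (i : 'I_n) := \max_(q : 'I_m | adj i q) (YY q - XX i).
Definition Vn (p : 'I_m) := \max_(i : 'I_n | adj i p) (YY p - XX i).

Lemma L1 k q (p : 'I_m) : adj k q -> (q <= p)%N -> (k <= cc p)%N.
Proof. move=> a qp; apply: (@leq_bigmax_cond _ (fun kp : 'I_n * 'I_m => (kp.2 <= p)%N && adj kp.1 kp.2) (fun kp => nat_of_ord kp.1) (k, q)); by rewrite /= qp a. Qed.

Lemma L2 (p q : 'I_m) : (p <= q)%N -> (cc p <= cc q)%N.
Proof.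
move=> pq; apply/bigmax_leqP => [[k r]] /= /andP [rp a].
apply: (@L1 k r q a); exact: leq_trans rp pq.
Qed.

Lemma L3 p : (0 < cc p)%N -> exists (k : 'I_n) (q : 'I_m), [/\ (q <= p)%N, adj k q & (k:nat) = cc p].
Proof.
move/bigmax_wit => [[k q] [/= /andP [qp a] e]]; by exists k, q.
Qed.

Lemma L4 (i : 'I_n) p : (XX i < YY p)%N <-> (i <= cc p)%N.
Proof.
rewrite /XX /YY; have Hp := ltn_ord p; split => H.
  case: (leqP i (cc p)) => // H2; nia.
nia.
Qed.

Lemma L5 (p q : 'I_m) : (p < q)%N -> (YY p < YY q)%N.
Proof. move=> pq; have := @L2 p q (ltnW pq); rewrite /YY; nia. Qed.

Lemma L6 (i : 'I_n) p : XX i <> YY p.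
Proof. rewrite /XX /YY; have Hp := ltn_ord p => E.
case: (leqP i (cc p)) => H2; nia.
Qed.
Lemma adjE (h1 : ~ has_P1 adj) (h2 : ~ has_P2 adj) (h3 : ~ has_P3 adj) i p :
  adj i p <-> [/\ (XX i < YY p)%N, (YY p - XX i <= Hn i)%N & (YY p - XX i <= Vn p)%N].
Proof.
split.
- move=> a; split.
  + apply/L4; exact: (@L1 i p p a (leqnn _)).
  + exact: (@leq_bigmax_cond _ (fun q => adj i q) (fun q => YY q - XX i) p a).
  + exact: (@leq_bigmax_cond _ (fun j => adj j p) (fun j => YY p - XX j) i a).
- case=> lt hH hV; apply/negPn/negP => na.
  have [q [aq eq]] : exists q, adj i q /\ YY q - XX i = Hn i.
    by apply: bigmax_wit; rewrite -/(Hn i); lia.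
  have [j [aj ej]] : exists j, adj j p /\ YY p - XX j = Vn p.
    by apply: bigmax_wit; rewrite -/(Vn p); lia.
  have pq : (p < q)%N.
    case: (ltngtP p q) => // [qp|pqe].
      by have := @L5 q p qp; lia.
    by have E : p = q := val_inj pqe; move: na; rewrite E aq.
  have ji : (j < i)%N.
    case: (ltngtP j i) => // [ij|e].
      move: ej hV lt; rewrite /XX => ej hV lt.
      have : (m.+1 * i < m.+1 * j)%N by rewrite ltn_pmul2l.
      lia.
    by have E : j = i := val_inj e; move: na; rewrite -E aj.
  have ci : (i <= cc p)%N by apply/L4.
  have [k [r [rp ak ek]]] := @L3 p (leq_ltn_trans (leq0n _) (leq_trans ji ci)).
  case: (ltngtP i k) => [ik | ki | ike]; last first.
  + have ike' : k = i := esym (val_inj ike).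
    subst k.
    case: (ltngtP r p) => [rp' | pr | rpe]; last first.
      by have E : r = p := val_inj rpe; move: na; rewrite -E ak.
      by rewrite ltnNge rp in pr.
    by apply: h3; exists j, i, r, p, q; split => //; apply/andP.
  + by move: ki; rewrite ek ltnNge ci.
  + case: (ltngtP r p) => [rp' | pr | rpe].
    * by apply: h1; exists j, i, k, r, p, q; split => //; apply/andP.
    * by rewrite ltnNge rp in pr.
    * have rpe' : r = p := val_inj rpe.
      subst r.
      by apply: h2; exists j, i, k, p, q; split => //; apply/andP.
Qed.
End C.
Arguments cc {n m} adj p.
Arguments YY {n m} adj p.
Arguments Hn {n m} adj i.
Arguments Vn {n m} adj p.
Arguments L5 {n m} adj p q.
Arguments L6 {n m} adj i p.
Arguments adjE {n m adj}.

Theorem theorem2 (n m : nat) (adj : 'I_n -> 'I_m -> bool) :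
  stick_rep_respecting adj <->
  (~ has_P1 adj /\ ~ has_P2 adj /\ ~ has_P3 adj).
Proof.
split.
- move=> [x [h [y [v [Hx [Hy [Hd [Hh [Hv Ha]]]]]]]]].
  have HA : forall i p, adj i p <->
      (x i <= y p /\ y p - x i <= h i /\ y p - x i <= v p)%R.
    by move=> i p; rewrite Ha meetE.
  split; [|split].
  + move=> [i [j [k [p [q [r [/andP[ij jk] /andP[pq qr] [a1 a2 a3 a4]]]]]]]].
    move/HA: a1 => a1; move/HA: a3 => a3; move/HA: a4 => a4.
    have := Hx _ _ ij; have := Hx _ _ jk; have := Hy _ _ pq; have := Hy _ _ qr.
    move=> *; apply: (negP a2); apply/HA; lra.
  + move=> [i [j [k [p [q [/andP[ij jk] pq [a1 a2 a3 a4]]]]]]].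
    move/HA: a1 => a1; move/HA: a3 => a3; move/HA: a4 => a4.
    have := Hx _ _ ij; have := Hx _ _ jk; have := Hy _ _ pq.
    move=> *; apply: (negP a2); apply/HA; lra.
  + move=> [i [j [p [q [r [ij /andP[pq qr] [a1 a2 a3 a4]]]]]]].
    move/HA: a1 => a1; move/HA: a2 => a2; move/HA: a4 => a4.
    have := Hx _ _ ij; have := Hy _ _ pq; have := Hy _ _ qr.
    move=> *; apply: (negP a3); apply/HA; lra.
- move=> [h1 [h2 h3]].
  exists (fun i => INR (XX m i)), (fun i => (INR (Hn adj i) + /2)%R),
    (fun p => INR (YY adj p)), (fun p => (INR (Vn adj p) + /2)%R).
  split; [|split; [|split; [|split; [|split]]]].
  + move=> i j ij; apply: lt_INR; apply/ltP; by rewrite /XX ltn_pmul2l.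
  + move=> p q pq; apply: lt_INR; apply/ltP; exact: L5.
  + move=> i p /INR_eq; exact: L6.
  + move=> i; have := pos_INR (Hn adj i); lra.
  + move=> p; have := pos_INR (Vn adj p); lra.
  + move=> i p; rewrite meetE (adjE h1 h2 h3); split.
    * case=> lt hH hV.
      have lt' : (INR (XX m i) < INR (YY adj p))%R by apply: lt_INR; apply/ltP.
      split; first lra.
      by split; apply/INR_diff.
    * case=> le [hH hV].
      have lt : (XX m i < YY adj p)%N.
        have := L6 adj i p; move/INR_le/leP: le; rewrite leq_eqVlt.
        by case/orP => // /eqP.
      have lt' : (INR (XX m i) < INR (YY adj p))%R by apply: lt_INR; apply/ltP.
      split => //; [apply/(@INR_diff _ _ (Hn adj i) lt) | apply/(@INR_diff _ _ (Vn adj p) lt)]; lra.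
Qed.
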